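(* For every graph $G$, $\hom(S_{2,1^0};G)^3\cdot\hom(S_{2,1^3};G)\ge \hom(S_{2,1^2};G)^3$.
   Context: All graphs are finite; $\hom(H;G)$ is the number of graph homomorphisms from $H$ to $G$. For $k\ge0$, $S_{2,1^k}$ is the tree with vertex set $\{1,\ldots,k+3\}$ and edge set $\{\{1,j\}:2\le j\le k+2\}\cup\{\{k+2,k+3\}\}$; in particular $S_{2,1^0}$ is the path with two edges. *)

(* Defs.v *)
From mathcomp Require Import all_boot.
Set Implicit Arguments. Unset Strict Implicit. Unset Printing Implicit Defensive.

Definition simple_graph (V : finType) (e : rel V) : Prop :=
  symmetric e /\ irreflexive e.

Definition hom (VH VG : finType) (eH : rel VH) (eG : rel VG) : nat :=
  #|[set f : {ffun VH -> VG} | [forall u, forall v, eH u v ==> eG (f u) (f v)]]|.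

(* S_{2,1^k} on vertices 'I_(k+3); the paper's vertex i (1-based) is the
   ordinal i-1.  Edges {1,j} (2<=j<=k+2) and {k+2,k+3}. *)
Definition S21_edge (k : nat) : rel 'I_(k + 3) :=
  fun u v =>
    [|| (val u == 0) && (1 <= val v <= k.+1),
        (val v == 0) && (1 <= val u <= k.+1),
        (val u == k.+1) && (val v == k.+2)
      | (val v == k.+1) && (val u == k.+2)].

Definition homS21 (k : nat) (V : finType) (e : rel V) : nat :=
  hom (@S21_edge k) e.

(* Main.v *)
Require Import Defs.
From mathcomp Require Import all_boot zify.
Set Implicit Arguments. Unset Strict Implicit. Unset Printing Implicit Defensive.

Lemma prod_family (aT rT : finType) (F : aT -> pred rT) :
  #|[pred f : {ffun aT -> rT} | [forall x, F x (f x)]]| = \prod_x #|F x|.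
Proof.
transitivity (foldr muln 1 [seq #|F x| | x : aT]); last first.
  by rewrite foldrE big_map big_enum.
rewrite -(@card_family aT (fun _ => rT) F).
apply: eq_card => f; apply/forallP/familyP => H x; exact: H.
Qed.

Lemma pairCS a b ui wi uj wj : a ^ 2 <= ui * wi -> b ^ 2 <= uj * wj ->
  2 * (a * b) <= ui * wj + uj * wi.
Proof.
move=> Ha Hb; rewrite -leq_sqr.
apply: (@leq_trans (4 * ((ui * wj) * (uj * wi)))).
  rewrite (_ : (2 * (a * b)) ^ 2 = 4 * (a ^ 2 * b ^ 2)); last by rewrite !expnMn.
  rewrite leq_pmul2l // (_ : ui * wj * (uj * wi) = (ui * wi) * (uj * wj)); last by lia.
  exact: leq_mul.
exact: nat_AGM2.
Qed.

Lemma GCS (I : finType) (P : pred I) (p u w : I -> nat) :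
  (forall i, P i -> p i ^ 2 <= u i * w i) ->
  (\sum_(i | P i) p i) ^ 2 <= (\sum_(i | P i) u i) * (\sum_(i | P i) w i).
Proof.
move=> H.
rewrite -(leq_pmul2l (isT : 0 < 2)) expnS expn1 !big_distrlr /=.
apply: (@leq_trans (\sum_(i | P i) \sum_(j | P j) (u i * w j + u j * w i))).
  rewrite big_distrr /=; apply: leq_sum => i Pi; rewrite big_distrr /=; apply: leq_sum => j Pj.
  exact: pairCS (H i Pi) (H j Pj).

under eq_bigr => i _ do rewrite big_split.
rewrite big_split /= [X in _ + X](exchange_big) /= addnn -mul2n.
by [].
Qed.

Section Count.
Variables (V : finType) (e : rel V).
Hypothesis esym : symmetric e.

Definition deg v := #|[pred u | e v u]|.
Definition sdeg v := \sum_(u | e v u) deg u.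

Variable k : nat.
Lemma o0P : 0 < k + 3. Proof. lia. Qed.
Lemma ok1P : k.+1 < k + 3. Proof. lia. Qed.
Definition o0 : 'I_(k+3) := Ordinal o0P.
Definition ok1 : 'I_(k+3) := Ordinal ok1P.

Definition Fn (v w : V) (i : nat) : pred V :=
  if i == 0 then pred1 v else if i <= k then [pred u | e v u]
  else if i == k.+1 then [pred u | (u == w) && e v w] else [pred u | e w u].

Lemma Fn_card v w :
  \prod_(x : 'I_(k+3)) #|Fn v w (val x)| = e v w * (deg v ^ k * deg w).
Proof.
rewrite -(big_mkord xpredT (fun i => #|Fn v w i|)) addn3.
rewrite big_nat_recr // big_nat_recr // big_nat_recl //.
have -> : \prod_(0 <= i < k) #|Fn v w i.+1| = \prod_(0 <= i < k) deg v.
  rewrite big_nat_cond [RHS]big_nat_cond; apply: eq_bigr => i /andP[/andP[_ Hi] _].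
  by rewrite /Fn /= ifT //.
rewrite prod_nat_const_nat subn0 /Fn /= card1.
rewrite (_ : (k.+1 <= k) = false); last by lia.
rewrite eqxx (_ : (k.+2 <= k) = false); last by lia.
rewrite (_ : (k.+2 == k.+1) = false); last by lia.
case: (e v w) => /=.
  rewrite (eq_card (B := pred1 w)); last by move=> u; rewrite [in LHS]unfold_in /= andbT.
  by rewrite card1 /deg !mul1n muln1.
rewrite (eq_card (B := pred0)); last by move=> u; rewrite [in LHS]unfold_in /= andbF.
by rewrite card0 !muln0 mul0n.
Qed.

Lemma Fn_equiv (f : {ffun 'I_(k+3) -> V}) v w :
  [forall a, forall b, S21_edge a b ==> e (f a) (f b)] && ((f o0, f ok1) == (v, w))
  = [forall x, Fn v w (val x) (f x)].
Proof.
apply/idP/forallP.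
  case/andP => /forallP H /eqP [H0 H1] x.
  have H' : forall a b, S21_edge a b -> e (f a) (f b).
    by move=> a b Hab; have /forallP/(_ b)/implyP := H a; apply.
  have Hx0 : forall y : 'I_(k+3), val y = 0 -> f y = v.
    by move=> y Hy; rewrite -H0; congr (f _); apply: val_inj.
  have Hx1 : forall y : 'I_(k+3), val y = k.+1 -> f y = w.
    by move=> y Hy; rewrite -H1; congr (f _); apply: val_inj.
  rewrite /Fn; case: ifP => [/eqP /Hx0 -> | X0]; first by rewrite /= eqxx.
  case: ifP => [Xk | Xk].
    rewrite /= -H0; apply: H'; rewrite /S21_edge /=; apply/orP; left.
    move/negbT: X0; rewrite -lt0n => X0; by rewrite X0 /= (leq_trans Xk).
  case: ifP => [/eqP Xk1 | Xk1].
    rewrite /= (Hx1 _ Xk1) eqxx /= -H0 -H1; apply: H'.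
    by rewrite /S21_edge /= leqnn.
  rewrite /= -H1; apply: H'; rewrite /S21_edge /= eqxx /=.
  have Hx := ltn_ord x.
  rewrite (_ : (nat_of_ord x == k.+2) = true) ?orbT //.
  move: X0 Xk Xk1 Hx; case: x => [i Hi] /= X0 Xk Xk1 _.
  apply/eqP; move/negbT: X0; move/negbT: Xk; move/negbT: Xk1; clear -Hi; lia.
move=> G.
have G0 : forall y : 'I_(k+3), val y = 0 -> f y = v.
  by move=> y Hy; have := G y; rewrite /Fn Hy /= => /eqP.
have G1 : forall y : 'I_(k+3), 0 < val y <= k -> e v (f y).
  move=> y /andP[Hy1 Hy2]; have := G y; rewrite /Fn Hy2.
  by rewrite (_ : (val y == 0) = false) //; move: Hy1; clear; case: (val y).
have G2 : forall y : 'I_(k+3), val y = k.+1 -> (f y == w) && e v w.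
  move=> y Hy; have := G y; rewrite /Fn Hy /=.
  by rewrite ltnn eqxx.
have G3 : forall y : 'I_(k+3), val y = k.+2 -> e w (f y).
  move=> y Hy; have := G y; rewrite /Fn Hy /=.
  have h1 : (k.+2 <= k) = false by rewrite ltnNge leqW ?leqnSn.
  have h2 : (k.+2 == k.+1) = false by rewrite eqSS; apply/negbTE; rewrite neq_ltn ltnSn orbT.
  by rewrite h1 h2.
have Hev : e v w by case/andP: (G2 ok1 erefl).
have G1' : forall y : 'I_(k+3), 0 < val y <= k.+1 -> e v (f y).
  move=> y /andP[Hy1 Hy2]; case: (leqP (val y) k) => Hyk.
    by apply: G1; rewrite Hy1.
  have Hy : val y = k.+1 by apply/eqP; rewrite eqn_leq Hy2.
  by case/andP: (G2 y Hy) => /eqP ->.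
apply/andP; split.
  apply/forallP => a; apply/forallP => b; apply/implyP.
  rewrite /S21_edge => /orP[/andP[/eqP a0 Hb]|/orP[/andP[/eqP b0 Ha]|/orP[/andP[/eqP ak /eqP bk]|/andP[/eqP bk /eqP ak]]]].
  - by rewrite (G0 a a0); apply: G1'.
  - by rewrite (G0 b b0) esym; apply: G1'.
  - by case/andP: (G2 a ak) => /eqP -> _; apply: G3.
  - by case/andP: (G2 b bk) => /eqP -> _; rewrite esym; apply: G3.
by rewrite (G0 o0 erefl); case/andP: (G2 ok1 erefl) => /eqP ->.
Qed.

Lemma homS21E : homS21 k e = \sum_v deg v ^ k * sdeg v.
Proof.
rewrite /homS21 /hom -sum1_card.
rewrite (partition_big (fun f : {ffun 'I_(k+3) -> V} => (f o0, f ok1)) xpredT) //.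
transitivity (\sum_v \sum_w e v w * (deg v ^ k * deg w)).
  rewrite pair_big /=; apply: eq_big => // [[v w]] _ /=.
  rewrite -[RHS]Fn_card -(prod_family (fun x : 'I_(k+3) => Fn v w (val x))).
  rewrite -sum1_card; apply: eq_bigl => f.
  by rewrite inE [in RHS]unfold_in /= Fn_equiv.
apply: eq_bigr => v _; rewrite /sdeg big_distrr /= [in RHS]big_mkcond /=.
by apply: eq_bigr => w _; case: (e v w); rewrite ?mul1n ?mul0n ?muln0.
Qed.
End Count.

Section Alg.
Variables (V : finType) (e : rel V).
Hypothesis esym : symmetric e.
Notation d := (deg e).
Notation s := (sdeg e).

Lemma sum_s_eq : \sum_v s v = \sum_v d v ^ 2.
Proof.
rewrite /sdeg.
under eq_bigr => v _ do rewrite big_mkcond /=.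
rewrite exchange_big /=; apply: eq_bigr => u _.
rewrite -big_mkcond /=.
transitivity (\sum_(v in [pred v | e u v]) d u).
  by apply: eq_bigl => v; rewrite [in RHS]unfold_in /= esym.
by rewrite sum_nat_const -mulnn.
Qed.

Lemma s_sq v : s v ^ 2 <= d v * \sum_u d u ^ 2.
Proof.
apply: (@leq_trans ((\sum_(u | e v u) 1) * (\sum_(u | e v u) d u ^ 2))).
  apply: GCS => u _; by rewrite mul1n.
apply: leq_mul.
  rewrite /deg -sum1_card; apply: eq_leq; apply: eq_bigl => u.
  by rewrite [in RHS]unfold_in.
rewrite big_mkcond /=; apply: leq_sum => u _; by case: (e v u).
Qed.

Definition A k := \sum_v d v ^ k * s v.

Lemma A0E : A 0 = \sum_v d v ^ 2.
Proof. by rewrite /A -sum_s_eq; apply: eq_bigr => v _; rewrite mul1n. Qed.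

Lemma step1 : A 2 ^ 2 <= A 0 * \sum_v d v ^ 2 * s v ^ 2.
Proof.
rewrite A0E /A; apply: GCS => v _.
by rewrite !expnS !expn0 !muln1; apply: eq_leq; lia.
Qed.

Lemma step2 : (\sum_v d v ^ 2 * s v ^ 2) ^ 2 <= A 3 * \sum_v d v * s v ^ 3.
Proof.
rewrite /A; apply: GCS => v _.
by rewrite !expnS !expn0 !muln1; apply: eq_leq; lia.
Qed.

Lemma step3 : \sum_v d v * s v ^ 3 <= A 0 * A 2.
Proof.
rewrite A0E /A big_distrr /=; apply: leq_sum => v _.
apply: (@leq_trans (d v * s v * (d v * \sum_u d u ^ 2))).
  by rewrite (expnS _ 2) mulnA leq_mul2l s_sq orbT.
by rewrite !expnS !expn0 !muln1; apply: eq_leq; lia.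
Qed.

Lemma mainA : A 2 ^ 3 <= A 0 ^ 3 * A 3.
Proof.
have h1 := step1; have h2 := step2; have h3 := step3.
move: h1 h2 h3.
set X := A 2; set Y := A 0; set Z := A 3.
set Q := \sum_v _; set R := \sum_v _ => h1 h2 h3.
have h4 : X ^ 4 <= Y ^ 3 * Z * X.
  apply: (@leq_trans ((Y * Q) ^ 2)).
    by rewrite (_ : 4 = 2 * 2) // expnM leq_sqr.
  rewrite expnMn; apply: (@leq_trans (Y ^ 2 * (Z * (Y * X)))).
    by rewrite leq_mul2l (leq_trans h2) ?orbT // leq_mul2l h3 orbT.
  by rewrite !expnS !expn0 !muln1; apply: eq_leq; lia.
case: (posnP X) => [->|Xpos]; first by rewrite exp0n.
by rewrite -(leq_pmul2r Xpos) -expnSr.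
Qed.
End Alg.

Theorem theorem3p2 (V : finType) (e : rel V) (He : simple_graph e) :
  homS21 2 e ^ 3 <= homS21 0 e ^ 3 * homS21 3 e.
Proof.
case: He => Hs _.
rewrite !(homS21E Hs).
exact: mainA.
Qed.
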